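(* Let $n\ge3$. For $k\ge0$ let $c_k$ be the number of elements of $K^{\infty}_n$ of length $k$, and for $k\ge1$, $1\le i\le n$, let $c_{k;i}$ be the number of elements of length $k$ whose canonical form begins with $y_i$. Then $c_0=1$, $c_{1;i}=1$ for all $i$, $c_k=\sum_{i=1}^n c_{k;i}$ for $k\ge1$, and for $k\ge2$: $$c_{k;j}=\sum_{i=\max(1,j-1)}^{n} c_{k-1;i}\quad (j\ne n),\qquad c_{k;n}=\sum_{i=n-2}^{n}c_{k-1;i}.$$
   Context: $K^{\infty}_n=\langle y_1,\dots,y_n\mid y_iy_j=y_jy_i\ (j+2\le i\le n-1),\ y_ny_k=y_ky_n\ (1\le k\le n-3)\rangle$. The canonical form of an element is its smallest representative word in length-lexicographic order with $y_1<\cdots<y_n$. *)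

(* Defs.v *)
From mathcomp Require Import all_boot.
Set Implicit Arguments. Unset Strict Implicit. Unset Printing Implicit Defensive.

(* Letters: y_p (1 <= p <= n) is represented by the ordinal p-1 : 'I_n,
   so the order y_1 < ... < y_n is the order on ordinals.  Below, relations
   are expressed on the 1-based indices p = a.+1. *)

(* the defining relations y_p y_q = y_q y_p of K^oo_n (one orientation) *)
Definition relK (n p q : nat) : bool :=
  ((q + 2 <= p) && (p <= n - 1)) || ((p == n) && (1 <= q) && (q <= n - 3)).

Definition commK (n a b : nat) : bool := relK n a.+1 b.+1 || relK n b.+1 a.+1.

Definition swap_at (i : nat) (s : seq nat) : seq nat :=
  take i s ++ [:: nth 0 s i.+1; nth 0 s i] ++ drop i.+2 s.

Definition stepK (n k : nat) (s t : k.-tuple 'I_n) : bool :=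
  [exists i : 'I_k, [&& i.+1 < k,
     commK n (nth 0 (map val s) i) (nth 0 (map val s) i.+1) &
     map val t == swap_at i (map val s)]].

(* equality in the monoid K^oo_n of two words (of the same length k; all
   relations are length preserving) *)
Definition eqK (n k : nat) (s t : k.-tuple 'I_n) : bool := connect (@stepK n k) s t.

(* the elements of K^oo_n of length k, as equivalence classes of words *)
Definition elemsK (n k : nat) : {set {set k.-tuple 'I_n}} :=
  [set [set t | eqK s t] | s : k.-tuple 'I_n].

Fixpoint lexle (s t : seq nat) : bool :=
  match s, t with
  | [::], _ => true
  | _ :: _, [::] => false
  | a :: s', b :: t' => (a < b) || ((a == b) && lexle s' t')
  end.

(* w is the canonical form of its element: the smallest representative in
   length-lexicographic order (all representatives have the same length) *)
Definition canonK (n k : nat) (w : k.-tuple 'I_n) : bool :=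
  [forall t : k.-tuple 'I_n, eqK w t ==> lexle (map val w) (map val t)].

Definition cK (n k : nat) : nat := #|elemsK n k|.

Definition cKi (n k i : nat) : nat :=
  #|[set X in elemsK n k |
      [exists w in X, canonK w && (head 0 (map val w) == i.-1) && (0 < k)]]|.

(* Main.v *)
Require Import Defs.
From mathcomp Require Import all_boot.
From mathcomp Require Import zify.
Set Implicit Arguments. Unset Strict Implicit. Unset Printing Implicit Defensive.

Section S.
Variable n : nat.

Lemma commK_key a b c : commK n a b -> commK n b c -> c < b < a -> commK n a c.
Proof. rewrite /commK /relK. lia. Qed.
Lemma commK_irr a : commK n a a = false.
Proof. rewrite /commK /relK. lia. Qed.
Lemma commK_sym a b : commK n a b = commK n b a.
Proof. by rewrite /commK orbC. Qed.

Definition stepS (u v : seq nat) : Prop :=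
  exists p x y r, [/\ commK n x y, u = p ++ x :: y :: r & v = p ++ y :: x :: r].

Inductive E : seq nat -> seq nat -> Prop :=
| E0 u : E u u
| ES u v w : stepS u v -> E v w -> E u w.

Lemma E_trans u v w : E u v -> E v w -> E u w.
Proof. elim=> // a b c H _ IH /IH; exact: ES. Qed.

Lemma E_size u v : E u v -> size u = size v.
Proof.
elim=> // a b c [p [x [y [r [_ -> ->]]]]] _ <-.
by rewrite !size_cat.
Qed.

Fixpoint front (b : nat) (u : seq nat) : bool :=
  if u is x :: u' then (x == b) || (commK n x b && front b u') else false.

Lemma step_front b u v : stepS u v ->
  front b u = front b v /\ (rem b u = rem b v \/ stepS (rem b u) (rem b v)).
Proof.
case=> p [x [y [r [Hc -> ->]]]].
elim: p => [|z p [IH1 IH2]] /=.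
  have Hxy : x != y by apply/eqP=> exy; rewrite exy commK_irr in Hc.
  case: (eqVneq x b) => [exb|nxb]; case: (eqVneq y b) => [eyb|nyb] //=.
  - by subst; rewrite eqxx in Hxy.
  - subst; rewrite /= ?eqxx ?(negbTE nyb) /= (commK_sym y) Hc; split=> //; by left.
  - subst; rewrite /= ?eqxx ?(negbTE nxb) /= ?Hc; split=> //; by left.
  - split; first by rewrite !andbA (andbC (commK n x b)).
    right; exists [::], x, y, (rem b r); split=> //.
case: (eqVneq z b) => [ezb|nzb] /=; first split=> //.
  by right; exists p, x, y, r.
split; first by rewrite IH1.
case: IH2 => [->|[p' [x' [y' [r' [Hc' -> ->]]]]]]; first by left.
by right; exists (z :: p'), x', y', r'.
Qed.

Lemma E_front b u v : E u v -> front b u = front b v /\ E (rem b u) (rem b v).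
Proof.
elim=> [w|a c d H _ [IH1 IH2]]; first by split=> //; constructor.
have [F1 F2] := step_front b H.
split; first by rewrite F1.
case: F2 => [->//|H2]; exact: ES H2 IH2.
Qed.

Definition good (a b : nat) : bool := ~~ ((b < a) && commK n a b).

Lemma lexle_refl s : lexle s s.
Proof. by elim: s => //= a s ->; rewrite eqxx orbT. Qed.

Lemma no_front b w a : path good a w -> commK n a b -> b < a -> front b w -> False.
Proof.
elim: w a => [//|c w IH] a /= /andP [Hg Hp] Hab Hba /orP [/eqP ecb|/andP [Hcb Hf]].
  by subst; move: Hg; rewrite /good Hba Hab.
case: (ltngtP b c) => [lbc|lcb|ebc].
- exact: (IH c Hp Hcb lbc Hf).
- have Hac : commK n a c by apply: (commK_key Hab); rewrite ?(commK_sym b) // lcb Hba.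
  by move: Hg; rewrite /good Hac (ltn_trans lcb Hba).
- by subst; rewrite commK_irr in Hcb.
Qed.

Lemma LG_min w t : sorted good w -> E w t -> lexle w t.
Proof.
elim: w t => [|a w IH] t //= Hs Hwt.
case: t Hwt => [|b t] Hwt; first by move/E_size: Hwt.
have [F1 F2] := E_front b Hwt.
have Hfb : front b (b :: t) by rewrite /= eqxx.
rewrite -F1 /= in Hfb.
case: (eqVneq a b) => [eab|nab].
  subst; move: F2; rewrite /= ?eqxx => F2; rewrite ?eqxx IH ?orbT //.
  by case: w Hs {IH Hwt F1 F2 Hfb} => //= ? ? /andP [].
move: Hfb; rewrite (negbTE nab) /= => /andP [Hab Hf].
case: (ltngtP a b) => [//|lba|eab]; last by rewrite eab eqxx in nab.
exfalso; exact: (no_front Hs Hab lba Hf).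
Qed.
End S.


Section T.
Variables n k : nat.
Implicit Types s t w : k.-tuple 'I_n.

Lemma stepK_S s t : stepK s t -> stepS n (map val s) (map val t).
Proof.
case/existsP=> i /and3P [Hi Hc /eqP Ht].
set u := map val s in Hc Ht *.
have Hsz : i.+1 < size u by rewrite size_map size_tuple.
exists (take i u), (nth 0 u i), (nth 0 u i.+1), (drop i.+2 u); split=> //.
  by rewrite -(drop_nth 0 Hsz) -(drop_nth 0 (ltnW Hsz)) cat_take_drop.
Qed.

Lemma eqK_E s t : eqK s t -> E n (map val s) (map val t).
Proof.
case/connectP=> p; elim: p s => [|x p IH] s /=; first by move=> _ ->; constructor.
case/andP=> H1 H2 Ht; apply: ES (stepK_S H1) (IH _ H2 Ht).
Qed.

Lemma LG_canon w : sorted (good n) (map val w) -> canonK w.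
Proof. move=> Hs; apply/forallP=> t; apply/implyP=> /eqK_E; exact: LG_min. Qed.

Lemma lexle_cat p a b : lexle (p ++ a) (p ++ b) = lexle a b.
Proof. by elim: p => //= x p ->; rewrite ltnn eqxx. Qed.

Lemma canon_LG w : canonK w -> sorted (good n) (map val w).
Proof.
move=> Hc; apply/(sortedP 0) => i; rewrite size_map size_tuple => Hi.
apply/negP => /andP [Hlt Hcomm].
have Hi' : i < k by apply: ltnW.
pose x0 := tnth w (Ordinal Hi').
pose ts := take i w ++ [:: nth x0 w i.+1; nth x0 w i] ++ drop i.+2 w.
have Hts : size ts == k.
  by rewrite /ts !size_cat size_take size_drop size_tuple /= Hi'; apply/eqP; lia.
pose t := Tuple Hts.
have Hmap : map val t = swap_at i (map val w).
  rewrite /= /ts /swap_at !map_cat map_take map_drop /=.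
  by rewrite -!(nth_map x0 0) ?size_tuple.
have Hst : stepK w t.
  apply/existsP; exists (Ordinal Hi'); rewrite /= Hi Hmap eqxx andbT.
  exact: Hcomm.
have := forallP Hc t; rewrite /eqK (connect1 Hst) /= Hmap /swap_at.
set u := map val w.
have Hu : u = take i u ++ [:: nth 0 u i; nth 0 u i.+1] ++ drop i.+2 u.
  have Hsz : i.+1 < size u by rewrite size_map size_tuple.
  by rewrite /= -(drop_nth 0 Hsz) -(drop_nth 0 (ltnW Hsz)) cat_take_drop.
rewrite {1}Hu lexle_cat /=.
have -> : (nth 0 u i < nth 0 u i.+1) = false by apply/negbTE; rewrite -leqNgt ltnW.
by rewrite (gtn_eqF Hlt).
Qed.
End T.


Lemma lexle_total s t : lexle s t || lexle t s.
Proof.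
elim: s t => [|a s IH] [|b t] //=.
case: (ltngtP a b) => //= eab; subst; rewrite eqxx /=; exact: IH.
Qed.

Lemma lexle_trans s t u : lexle s t -> lexle t u -> lexle s u.
Proof.
elim: s t u => [|a s IH] [|b t] [|c u] //=.
case/orP=> [lab|/andP [/eqP eab H1]]; case/orP=> [lbc|/andP [/eqP ebc H2]].
- by rewrite (ltn_trans lab lbc).
- by subst; rewrite lab.
- by subst; rewrite lbc.
- by subst; rewrite eqxx (IH _ _ H1 H2) orbT.
Qed.

Lemma lexle_anti s t : lexle s t -> lexle t s -> s = t.
Proof.
elim: s t => [|a s IH] [|b t] //=.
case: (ltngtP a b) => //= eab; subst; rewrite ?eqxx /= => H1 H2; by rewrite (IH _ H1 H2).
Qed.

Section C.
Variables n k : nat.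
Implicit Types s t w : k.-tuple 'I_n.

Lemma stepK_sym : symmetric (@stepK n k).
Proof.
suff H : forall s t, stepK s t -> stepK t s.
  by move=> s t; apply/idP/idP; apply: H.
move=> s t /existsP [i /and3P [Hi Hc /eqP Ht]]; apply/existsP; exists i.
have Hsz : i.+1 < size (map val s) by rewrite size_map size_tuple.
have Hsw : swap_at i (map val s) = take i (map val s) ++ [:: nth 0 (map val s) i.+1; nth 0 (map val s) i] ++ drop i.+2 (map val s) by [].
have Hl : size (take i (map val s)) = i by rewrite size_take (ltnW Hsz).
have Ht1 : nth 0 (map val t) i = nth 0 (map val s) i.+1.
  by rewrite Ht Hsw nth_cat Hl ltnn subnn.
have Ht2 : nth 0 (map val t) i.+1 = nth 0 (map val s) i.
  by rewrite Ht Hsw nth_cat Hl ltnNge leqnSn /= subSnn.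
rewrite Hi Ht1 Ht2 commK_sym Hc /=.
apply/eqP; rewrite /swap_at Ht1 Ht2 Ht Hsw.
rewrite take_size_cat // drop_cat Hl.
have -> : (i.+2 < i) = false by lia.
have -> : i.+2 - i = 2 by lia.
by rewrite /= drop0 -(drop_nth 0 Hsz) -(drop_nth 0 (ltnW Hsz)) cat_take_drop.
Qed.

Lemma eqK_sym s t : eqK s t = eqK t s.
Proof. by rewrite /eqK; apply: (sym_connect_sym stepK_sym). Qed.

Lemma eqK_trans s t u : eqK s t -> eqK t u -> eqK s u.
Proof. exact: connect_trans. Qed.

Definition cls s : {set k.-tuple 'I_n} := [set t | eqK s t].

Lemma min_exists (L : seq (k.-tuple 'I_n)) x : x \in L ->
  exists2 w, w \in L & forall t, t \in L -> lexle (map val w) (map val t).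
Proof.
elim: L x => [//|y L IH] x _.
case: L IH => [|z L] IH.
  exists y; first exact: mem_head.
  by move=> t; rewrite inE => /eqP ->; apply: lexle_refl.
have [w Hw Hmin] := IH z (mem_head _ _).
case/orP: (lexle_total (map val y) (map val w)) => Hyw.
  exists y; first exact: mem_head.
  move=> t; rewrite inE => /orP [/eqP ->|/Hmin]; first exact: lexle_refl.
  exact: lexle_trans.
exists w; first by rewrite inE Hw orbT.
by move=> t; rewrite inE => /orP [/eqP ->|/Hmin].
Qed.

Lemma canon_exists s : exists2 w, w \in cls s & canonK w.
Proof.
have Hs : s \in enum (cls s) by rewrite mem_enum inE /eqK connect0.
have [w Hw Hmin] := min_exists Hs.
exists w; first by rewrite -mem_enum.
apply/forallP => t; apply/implyP => Hwt; apply: Hmin.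
rewrite mem_enum inE; apply: eqK_trans Hwt.
by move: Hw; rewrite mem_enum inE.
Qed.

Lemma canon_uniq w1 w2 : canonK w1 -> canonK w2 -> eqK w1 w2 -> w1 = w2.
Proof.
move=> /forallP H1 /forallP H2 H12.
have L1 := implyP (H1 w2) H12.
have L2 := implyP (H2 w1) (etrans (eqK_sym _ _) H12).
by apply: val_inj; apply: (inj_map val_inj); apply: lexle_anti.
Qed.

Lemma card_classes (P : pred (k.-tuple 'I_n)) : (forall w, P w -> canonK w) ->
  #|[set X in elemsK n k | [exists w in X, P w]]| = #|[set w | P w]|.
Proof.
move=> HP.
have -> : [set X in elemsK n k | [exists w in X, P w]] = cls @: [set w | P w].
  apply/setP => X; rewrite inE; apply/andP/imsetP.
    case=> /imsetP [s _ ->] /existsP [w /andP [Hw Pw]].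
    exists w; first by rewrite inE.
    apply/setP => t; rewrite !inE; move: Hw; rewrite inE => Hsw.
    apply/idP/idP => H.
      by apply: eqK_trans H; rewrite eqK_sym.
    exact: eqK_trans Hsw H.
  case=> w; rewrite inE => Pw ->; split.
    by apply/imsetP; exists w.
  by apply/existsP; exists w; rewrite !inE /eqK connect0.
rewrite card_in_imset // => w1 w2; rewrite !inE => P1 P2 Heq.
apply: canon_uniq (HP _ P1) (HP _ P2) _.
have : w2 \in cls w2 by rewrite inE /eqK connect0.
by rewrite -Heq inE.
Qed.

Lemma cK_canon : cK n k = #|[set w : k.-tuple 'I_n | canonK w]|.
Proof.
rewrite /cK -(card_classes (P := fun w => canonK w)) //.
apply: eq_card => X; rewrite [in RHS]inE; apply/idP/andP => [HX|[]//].
split=> //; case/imsetP: HX => s _ ->.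
by have [w Hw Hc] := canon_exists s; apply/existsP; exists w; rewrite Hw.
Qed.
End C.


Section G.
Variable n : nat.

Definition G k h := #|[set w : k.-tuple 'I_n | sorted (good n) (map val w) && (head 0 (map val w) == h)]|.

Lemma headval k (t : k.+1.-tuple 'I_n) : head 0 (map val t) = val (thead t).
Proof. by case: t => [[|x s] Hs]. Qed.

Lemma part_head k (P : pred (k.+1.-tuple 'I_n)) :
  #|[set t | P t]| = \sum_(i : 'I_n) #|[set t | P t && (thead t == i)]|.
Proof.
rewrite -sum1_card (partition_big (fun t => thead t) predT) //=.
apply: eq_bigr => i _; rewrite -sum1_card; apply: eq_bigl => t; by rewrite !inE.
Qed.

Lemma cKi_G k i : 0 < k -> cKi n k i = G k i.-1.
Proof.
move=> Hk; rewrite /cKi (card_classes (P := fun w => canonK w && (head 0 (map val w) == i.-1) && (0 < k))); last by move=> w /andP [/andP []].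
apply: eq_card => w; rewrite !inE Hk andbT.
case Hc: (canonK w); first by rewrite (canon_LG Hc).
by case Hs: (sorted _ _) => //; rewrite (LG_canon Hs) in Hc.
Qed.

Lemma cK_sum k : cK n k.+1 = \sum_(h < n) G k.+1 h.
Proof.
rewrite cK_canon part_head; apply: eq_bigr => i _; apply: eq_card => w.
rewrite !inE headval.
case Hc: (canonK w); first by rewrite (canon_LG Hc).
by case Hs: (sorted _ _) => //; rewrite (LG_canon Hs) in Hc.
Qed.

Lemma G_rec k h (Hh : h < n) : G k.+2 h = \sum_(i < n | good n h i) G k.+1 i.
Proof.
pose x := Ordinal Hh.
pose B := [set t : k.+1.-tuple 'I_n | sorted (good n) (map val t) && good n h (val (thead t))].
have -> : G k.+2 h = #|(fun t : k.+1.-tuple 'I_n => cons_tuple x t) @: B|.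
  rewrite /G; apply: eq_card => w; rewrite inE.
  apply/andP/imsetP => [[Hs Hw]|[t Ht ->]].
    have Hw' : val (thead w) = h by rewrite -headval; apply/eqP.
    exists [tuple of behead w].
      rewrite inE -(headval [tuple of behead w]) /=; move: Hs; rewrite (tuple_eta w) /= -Hw'.
      have Hsz : size (map val (behead w)) = k.+1 by rewrite size_map size_behead size_tuple.
      by case: (map val (behead w)) Hsz => //= ? ? _ /andP [-> ->].
    apply: val_inj; rewrite /= [in LHS](tuple_eta w) /=; congr (_ :: _).
    by apply: val_inj; rewrite /= Hw'.
  move: Ht; rewrite inE /= => /andP [Hs Hg]; split=> //.
  by rewrite -headval in Hg; case: (map val t) Hs Hg => //= ? ? -> ->.
rewrite card_imset; last first.
  by move=> t1 t2 /(congr1 val) /= [] /val_inj.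
rewrite part_head [in RHS]big_mkcond /=; apply: eq_bigr => i _.
case Hg: (good n h i).
  apply: eq_card => t; rewrite !inE headval.
  rewrite -[\val (thead t) == \val i]/(thead t == i).
  by case: (eqVneq (thead t) i) => [->|Hne]; rewrite ?Hg ?andbT ?andbF.
apply: eq_card0 => t; rewrite !inE.
by case: (eqVneq (thead t) i) => [->|Hne]; rewrite ?Hg ?andbT ?andbF.
Qed.
End G.


Lemma G1 n h : h < n -> G n 1 h = 1.
Proof.
move=> Hh; rewrite /G -[RHS](cards1 [tuple (Ordinal Hh)]); apply: eq_card => w; rewrite !inE.
case: w => [[|a [|b s]] Hs] //=.
apply/eqP/eqP => [E|E].
  by apply: val_inj => /=; congr [:: _]; apply: val_inj.
by move/(congr1 val): E => /= [->].
Qed.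

Lemma cK0 n : cK n 0 = 1.
Proof.
rewrite cK_canon -[RHS](expn0 #|'I_n|) -card_tuple -cardsT.
apply: eq_card => w; rewrite !inE; apply/forallP => t; apply/implyP => _.
by have := size_tuple w; rewrite -(size_map val) => /size0nil ->.
Qed.

Lemma sum_thr (F : nat -> nat) m N (P : pred nat) : m <= N ->
  (forall i, i < N -> P i = (m <= i)) ->
  \sum_(i < N | P i) F i = \sum_(m <= i < N) F i.
Proof.
move=> Hm HP; rewrite -(big_mkord P F) (@big_cat_nat _ _ _ m 0 N _ _ (leq0n m) Hm) /=.
rewrite [X in X + _]big_nat_cond big1 ?add0n; last first.
  move=> i /andP [/andP [_ Hi] Pi]; move: Pi; rewrite HP; last exact: leq_trans Hi Hm.
  by rewrite leqNgt Hi.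
rewrite big_nat_cond [RHS]big_nat_cond; apply: eq_bigl => i.
case Hr: (m <= i < N) => //=; case/andP: Hr => Hmi HiN; by rewrite HP.
Qed.

Theorem corollary2 (n : nat) : 3 <= n ->
  [/\ cK n 0 = 1,
      (forall i, 1 <= i <= n -> cKi n 1 i = 1),
      (forall k, 1 <= k -> cK n k = \sum_(1 <= i < n.+1) cKi n k i),
      (forall k j, 2 <= k -> 1 <= j <= n -> j != n ->
         cKi n k j = \sum_(maxn 1 (j - 1) <= i < n.+1) cKi n k.-1 i) &
      (forall k, 2 <= k ->
         cKi n k n = \sum_(n - 2 <= i < n.+1) cKi n k.-1 i)].
Proof.
move=> Hn; split.
- exact: cK0.
- move=> i /andP [H1 H2]; rewrite cKi_G // G1 //; lia.
- case=> [//|k] _; rewrite cK_sum.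
  rewrite (@eq_big_nat _ _ _ 1 n.+1 _ (fun i => G n k.+1 i.-1)); last first.
    by move=> i /andP [Hi _]; rewrite cKi_G.
  by rewrite big_add1 /= big_mkord.
- case=> [//|[//|k]] j _ /andP [H1 H2] Hjn; rewrite cKi_G // G_rec; last by lia.
  rewrite (@eq_big_nat _ _ _ _ n.+1 _ (fun i => G n k.+1 i.-1)); last first.
    by move=> i /andP [Hi _]; rewrite cKi_G.
  have -> : maxn 1 (j - 1) = (j - 2).+1 by lia.
  rewrite big_add1 /=; apply: sum_thr; first by lia.
  move=> i Hi; rewrite /good /commK /relK.
  have Hj : j != n by [].
  move/eqP: Hj => Hj; lia.
- case=> [//|[//|k]] _; rewrite cKi_G // G_rec; last by lia.
  rewrite (@eq_big_nat _ _ _ _ n.+1 _ (fun i => G n k.+1 i.-1)); last first.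
    move=> i /andP [Hi _]; rewrite cKi_G //; lia.
  have -> : n - 2 = (n - 3).+1 by lia.
  rewrite big_add1 /=; apply: sum_thr; first by lia.
  move=> i Hi; rewrite /good /commK /relK; lia.
Qed.
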